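(* Let $r\ge2$ and let $F$ be an $r$-critical graph with $f$ vertices. For every $\epsilon>0$ there exists $\delta>0$ such that the following holds: if $n=\sum_{i=1}^r n_i>1/\delta$ and, for all $i\in[r]$, we have $0\le d_i\le n_i$, $|n_i-n/r|\le\delta n$ and $|\xi_i-d_i/n|\le\delta$, then, with $\boldsymbol{d}=(d_1,\dots,d_r)$ and $\boldsymbol{\xi}=(\xi_1,\dots,\xi_r)$, \[|F(n_1,\dots,n_r;\boldsymbol{d})-n^{f-1}P_F(\boldsymbol{\xi})|<\epsilon n^{f-1}.\]
   Context: A graph $F$ is $r$-critical if $\chi(F)=r+1$ and $F$ contains an edge $e$ with $\chi(F-e)=r$. A vertex $u$ of $F$ is critical if $\chi(F-u)=r$. $F(n_1,\dots,n_r;\boldsymbol{d})$ denotes the number of subgraphs isomorphic to $F$ in the graph $K(V_1,\dots,V_r)+z$, where $K(V_1,\dots,V_r)$ is the complete $r$-partite graph on disjoint parts with $|V_i|=n_i$, and $z$ is an extra vertex having exactly $d_i$ neighbors in $V_i$ for each $i$. Let $\mathrm{Aut}(F)$ denote the number of automorphisms of $F$. For $\boldsymbol{\xi}\in\mathbb{R}^r$, \[P_F(\boldsymbol{\xi})=\frac{1}{\mathrm{Aut}(F)}\sum_{u\text{ critical}}\ \sum_{\chi_u}\ \prod_{i=1}^r \frac{1}{r^{x_i}}\xi_i^{y_i},\] where the inner sum is over all proper colorings $\chi_u:V(F)\setminus\{u\}\to[r]$ of $F-u$, $y_i$ is the number of neighbors of $u$ receiving color $i$, and $x_i$ is the number of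 non-neighbors of $u$ (other than $u$) receiving color $i$. *)

(* Defs.v *)
From HB Require Import structures.
From mathcomp Require Import all_boot all_order all_fingroup all_algebra.
From mathcomp Require Import reals.
Set Implicit Arguments. Unset Strict Implicit. Unset Printing Implicit Defensive.
Import Order.TTheory GRing.Theory Num.Theory.

(* Graphs are symmetric irreflexive relations [adj : rel T] on a finType T. *)

(* S is properly colourable with k colours (colours are naturals < k;
   any k-colouring with k <= #|T| can be encoded in 'I_#|T|). *)
Definition colorable_on (T : finType) (adj : rel T) (S : {set T}) (k : nat) : bool :=
  [exists c : {ffun T -> 'I_#|T|},
     [forall x in S, c x < k] &&
     [forall x in S, forall y in S, adj x y ==> (c x != c y)]].

(* Chromatic number of the subgraph induced on S: least k with S k-colourable
   (S is always #|T|-colourable). *)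
Definition chrom_on (T : finType) (adj : rel T) (S : {set T}) : nat :=
  find (colorable_on adj S) (iota 0 #|T|.+1).

Definition chrom (T : finType) (adj : rel T) : nat := chrom_on adj setT.

Definition del_edge (T : finType) (adj : rel T) (x y : T) : rel T :=
  fun a b => adj a b && ~~ (((a == x) && (b == y)) || ((a == y) && (b == x))).

Definition r_critical (T : finType) (adj : rel T) (r : nat) : Prop :=
  chrom adj = r.+1 /\ exists x y, adj x y /\ chrom (del_edge adj x y) = r.

Definition crit_vertex (T : finType) (adj : rel T) (r : nat) (u : T) : bool :=
  chrom_on adj (~: [set u]) == r.

Definition aut_num (T : finType) (adj : rel T) : nat :=
  #|[set s : {perm T} | [forall x, forall y, adj (s x) (s y) == adj x y]]|.

(* The host graph K(V_1,...,V_r) + z.  Vertices: Some (existT i j) with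
   j : 'I_(n i) is the j-th vertex of V_i, and None is z.  z is joined to
   the first d_i vertices of V_i. *)
Definition hostV (r : nat) (n : 'I_r -> nat) : finType :=
  option {i : 'I_r & 'I_(n i)}.

Definition host_adj (r : nat) (n d : 'I_r -> nat) : rel (hostV n) :=
  fun a b => match a, b with
  | Some a', Some b' => tag a' != tag b'
  | Some a', None => (tagged a' : nat) < d (tag a')
  | None, Some b' => (tagged b' : nat) < d (tag b')
  | None, None => false
  end.

(* Number of subgraphs of (U, adjG) isomorphic to (T, adj): the number of
   distinct pairs (vertex set, edge set) arising as images of injective
   homomorphisms T -> U. *)
Definition sub_copies (T U : finType) (adj : rel T) (adjG : rel U) : nat :=
  #|[set ((phi @: [set: T]),
          [set (phi p.1, phi p.2) | p in [set p : T * T | adj p.1 p.2]])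
     | phi : {ffun T -> U} in [set phi : {ffun T -> U} |
                 injectiveb phi &&
                 [forall x, forall y, adj x y ==> adjG (phi x) (phi y)]]]|.

Definition Fcount (T : finType) (adj : rel T) (r : nat) (n d : 'I_r -> nat) : nat :=
  sub_copies adj (@host_adj r n d).

Definition PF (R : realType) (T : finType) (adj : rel T) (r : nat) (xi : 'I_r -> R) : R :=
  (aut_num adj)%:R^-1 *
  \sum_(u : T | crit_vertex adj r u)
    \sum_(c : {ffun {x : T | x != u} -> 'I_r} |
            [forall v, forall w, adj (val v) (val w) ==> (c v != c w)])
      \prod_(i < r)
        ((r%:R ^+ #|[set v | ~~ adj u (val v) & c v == i]|)^-1 *
         xi i ^+ #|[set v | adj u (val v) & c v == i]|).

(* Main.v *)
Require Import Defs.
From HB Require Import structures.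
From mathcomp Require Import all_boot all_order all_fingroup all_algebra.
From mathcomp Require Import reals.
From mathcomp Require Import zify ring lra.
Import Order.TTheory GRing.Theory Num.Theory.
Set Implicit Arguments. Unset Strict Implicit.
Section Chrom.
Variables (T : finType) (adj : rel T).

Lemma colorable_mono S k k' : k <= k' -> colorable_on adj S k -> colorable_on adj S k'.
Proof.
move=> kk /existsP[c /andP[H1 H2]]; apply/existsP; exists c; rewrite H2 andbT.
apply/forallP => x; apply/implyP => xS; have := (forallP H1 x); rewrite xS /=.
move=> h; exact: leq_trans h kk.
Qed.

Lemma colorable_chrom S k : k <= #|T| -> colorable_on adj S k -> chrom_on adj S <= k.
Proof.
move=> kT ck; rewrite leqNgt; apply/negP => lt.
have := before_find 0 lt; rewrite nth_iota ?add0n ?ck //; lia.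
Qed.

Lemma chrom_colorable S : irreflexive adj -> colorable_on adj S (chrom_on adj S).
Proof.
move=> irr.
have hT : colorable_on adj S #|T|.
  apply/existsP; exists [ffun x => enum_rank x]; apply/andP; split.
    by apply/forallP => x; apply/implyP => _; rewrite ffunE ltn_ord.
  apply/forallP => x; apply/implyP => _; apply/forallP => y; apply/implyP => _.
  apply/implyP => axy; rewrite !ffunE; apply/negP => /eqP/enum_rank_inj exy.
  by move: axy; rewrite exy irr.
have hs : has (colorable_on adj S) (iota 0 #|T|.+1).
  by apply/hasP; exists #|T|; rewrite // mem_iota /=.
have := nth_find 0 hs; rewrite nth_iota ?add0n //.
by rewrite -[X in _ < X](size_iota 0 #|T|.+1) -has_find.
Qed.

Lemma col_of_fun (S : {set T}) r (g : T -> 'I_r) : r <= #|T| ->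
  (forall x y, x \in S -> y \in S -> adj x y -> g x != g y) -> colorable_on adj S r.
Proof.
move=> rT hg; apply/existsP; exists [ffun x => widen_ord rT (g x)]; apply/andP; split.
  by apply/forallP => x; apply/implyP => _; rewrite ffunE /= ltn_ord.
apply/forallP => x; apply/implyP => xS; apply/forallP => y; apply/implyP => yS.
apply/implyP => axy; rewrite !ffunE; apply/negP => /eqP [] /val_inj e.
by move: (hg x y xS yS axy); rewrite e eqxx.
Qed.

Variable r : nat.
Hypothesis irr : irreflexive adj.
Hypothesis r_pos : 0 < r.
Hypothesis crit : r_critical adj r.

Lemma crit_rT : r < #|T|.
Proof.
case: crit => ch _.
have := colorable_chrom (S := setT) (leqnn #|T|).
rewrite /chrom in ch; rewrite ch; apply.
apply/existsP; exists [ffun x => enum_rank x]; apply/andP; split.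
  by apply/forallP => x; apply/implyP => _; rewrite ffunE ltn_ord.
apply/forallP => x; apply/implyP => _; apply/forallP => y; apply/implyP => _.
apply/implyP => axy; rewrite !ffunE; apply/negP => /eqP/enum_rank_inj exy.
by move: axy; rewrite exy irr.
Qed.

Lemma not_col_r : ~~ colorable_on adj setT r.
Proof.
apply/negP => cr; case: crit => ch _.
have := colorable_chrom (ltnW crit_rT) cr; rewrite /chrom in ch; rewrite ch; lia.
Qed.

Lemma no_full_col (g : T -> 'I_r) : ~ (forall x y, adj x y -> g x != g y).
Proof.
move=> hg; move/negP: not_col_r; apply; apply: col_of_fun (ltnW crit_rT) _.
by move=> x y _ _; apply: hg.
Qed.

Lemma crit_of_col u (c : {ffun {x | x != u} -> 'I_r}) :
  [forall v, forall w, adj (val v) (val w) ==> (c v != c w)] -> crit_vertex adj r u.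
Proof.
move=> cp; have rT := crit_rT.
have r0 : 'I_r by exists 0; lia.
pose g x := if insub x is Some v then c v else r0.
have cS : colorable_on adj (~: [set u]) r.
  apply: (@col_of_fun _ r g (ltnW rT)) => x y; rewrite !inE => xu yu axy.
  rewrite /g; case: (@insubP _ _ {x | x != u} x) => [v _ vx|]; last by rewrite xu.
  case: (@insubP _ _ {x | x != u} y) => [w _ wy|]; last by rewrite yu.
  by have := forallP (forallP cp v) w; rewrite vx wy axy.
have le := colorable_chrom (ltnW rT) cS.
rewrite /crit_vertex eqn_leq le /=; rewrite leqNgt; apply/negP => lt.
move/negP: not_col_r; apply.
have /existsP[c0 /andP[c0lt c0p]] := chrom_colorable (~: [set u]) irr.
set k := chrom_on adj (~: [set u]) in lt c0lt c0p.
have kT : k < #|T| by lia.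
apply: (@colorable_mono _ k.+1); first by [].
apply/existsP; exists [ffun x => if x == u then Ordinal kT else c0 x].
apply/andP; split.
  apply/forallP => x; apply/implyP => _; rewrite ffunE; case: eqP => [_|/eqP xu] //=.
  by have := forallP c0lt x; rewrite !inE xu /= => /ltnW.
apply/forallP => x; apply/implyP => _; apply/forallP => y; apply/implyP => _.
apply/implyP => axy; rewrite !ffunE.
case: (eqVneq x u) => [xu|xu]; case: (eqVneq y u) => [yu|yu].
- by move: axy; rewrite xu yu irr.
- apply/negP => /eqP e; have := forallP c0lt y; rewrite !inE yu -e /=; lia.
- apply/negP => /eqP e; have := forallP c0lt x; rewrite !inE xu e /=; lia.
- have := forallP c0p x; rewrite !inE xu /= => /forallP /(_ y); rewrite !inE yu axy; by [].
Qed.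
End Chrom.
Section Orbit.
Variables (T U : finType) (adj : rel T) (adjG : rel U).

Definition InjS := [set phi : {ffun T -> U} |
                 injectiveb phi &&
                 [forall x, forall y, adj x y ==> adjG (phi x) (phi y)]].
Definition keyf (phi : {ffun T -> U}) :=
  ((phi @: [set: T]),
          [set (phi p.1, phi p.2) | p in [set p : T * T | adj p.1 p.2]]).
Definition AutS := [set s : {perm T} | [forall x, forall y, adj (s x) (s y) == adj x y]].

Lemma fiber_eq phi : phi \in InjS ->
  [set psi in InjS | keyf psi == keyf phi] = [set [ffun x => phi (s x)] | s : {perm T} in AutS].
Proof.
rewrite inE => /andP[/injectiveP phiI phiH].
apply/setP => psi; apply/idP/idP.
- rewrite !inE => /andP[/andP[/injectiveP psiI psiH] /eqP [kV kE]].
  have ex x : exists y, phi y == psi x.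
    have : psi x \in psi @: [set: T] by apply: imset_f.
    by rewrite kV => /imsetP[y _ ->]; exists y.
  pose g x := odflt x [pick y | phi y == psi x].
  have gP x : phi (g x) = psi x.
    rewrite /g; case: pickP => [y /eqP //|none].
    by have [y] := ex x; rewrite none.
  have gI : injective g by move=> x y e; apply: psiI; rewrite -!gP e.
  apply/imsetP; exists (perm gI).
    rewrite inE; apply/forallP => x; apply/forallP => y; rewrite !permE.
    apply/eqP; apply/idP/idP => a.
    + have : (psi x, psi y) \in [set (phi p.1, phi p.2) | p in [set p : T * T | adj p.1 p.2]].
        by apply/imsetP; exists (g x, g y); rewrite ?inE //= !gP.
      rewrite -kE => /imsetP[[a1 a2]]; rewrite inE /= => a12 [] e1 e2.
      by rewrite (psiI _ _ e1) (psiI _ _ e2).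
    + have : (psi x, psi y) \in [set (psi p.1, psi p.2) | p in [set p : T * T | adj p.1 p.2]].
        by apply/imsetP; exists (x, y); rewrite ?inE.
      rewrite kE => /imsetP[[a1 a2]]; rewrite inE /= -!gP => a12 [] e1 e2.
      by rewrite (phiI _ _ e1) (phiI _ _ e2).
  by apply/ffunP => x; rewrite ffunE permE gP.
- case/imsetP => s; rewrite inE => sA ->.
  move: sA; rewrite inE => sA.
  have sAd x y : adj (s x) (s y) = adj x y.
    by apply/eqP; have /forallP h := sA; have /forallP h2 := h x; exact: h2 y.
  rewrite !inE; apply/andP; split; first apply/andP; first split.
  + by apply/injectiveP => x y; rewrite !ffunE => /phiI /perm_inj.
  + apply/forallP => x; apply/forallP => y; apply/implyP => a; rewrite !ffunE.
    by have := forallP (forallP phiH (s x)) (s y); rewrite sAd a.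
  + apply/eqP; rewrite /keyf; congr pair.
    * apply/setP => z; apply/imsetP/imsetP => [[x _ ->]|[x _ ->]].
        by exists (s x); rewrite ?inE ?ffunE.
      by exists (s^-1 x)%g; rewrite ?inE ?ffunE ?permKV.
    * apply/setP => z; apply/imsetP/imsetP => [[[x y]]|[[x y]]]; rewrite inE /= => a ->.
        by exists (s x, s y); rewrite ?inE ?ffunE //= sAd.
      exists ((s^-1 x)%g, (s^-1 y)%g); rewrite ?inE ?ffunE //= ?permKV //.
      by rewrite -sAd !permKV.
Qed.

Lemma fiber_card phi : phi \in InjS ->
  #|[set psi in InjS | keyf psi == keyf phi]| = #|AutS|.
Proof.
move=> hp; rewrite fiber_eq //; apply: card_in_imset => s t _ _ /ffunP e.
move: hp; rewrite inE => /andP[/injectiveP phiI _].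
apply/permP => x; have := e x; rewrite !ffunE; exact: phiI.
Qed.

Lemma card_orbit : (sub_copies adj adjG * aut_num adj)%N = #|InjS|.
Proof.
have -> : sub_copies adj adjG = #|keyf @: InjS| by [].
have -> : aut_num adj = #|AutS| by [].
rewrite -[#|InjS|]sum1_card (partition_big_imset keyf) /=.
rewrite -sum_nat_const; apply: eq_bigr => k /imsetP[phi hp ->].
rewrite -(fiber_card hp) -sum1_card; apply: eq_bigl => psi; by rewrite !inE.
Qed.
End Orbit.
Lemma double_count (I J : finType) (B : I -> {set J}) :
  (\sum_i #|B i| = \sum_j #|[set i | j \in B i]|)%N.
Proof.
under eq_bigr do rewrite -sum1_card big_mkcond /=.
rewrite exchange_big /=; apply: eq_bigr => j _.
by rewrite -sum1_card [RHS]big_mkcond /=; apply: eq_bigr => i _; rewrite inE.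
Qed.

Lemma card_hostV r (n : 'I_r -> nat) : #|hostV n| = (\sum_(i < r) n i).+1.
Proof.
rewrite /hostV card_option card_tagged sumnE big_map big_enum /=.
by congr S; apply: eq_bigr => i _; rewrite card_ord.
Qed.

Section Host.
Variables (T : finType) (adj : rel T) (r : nat) (n d : 'I_r -> nat).
Hypothesis irr : irreflexive adj.
Hypothesis sym : symmetric adj.
Hypothesis r_pos : 0 < r.
Hypothesis crit : r_critical adj r.
Local Notation V := (hostV n).
Local Notation G := (@host_adj r n d).

Definition Inj_u u := [set phi in InjS adj G | phi u == None].

Lemma inj_one_none phi : phi \in InjS adj G -> #|[set u | phi u == None]| = 1.
Proof.
rewrite inE => /andP[/injectiveP phiI phiH].
have r0 : 'I_r by exists 0.
have [u0 hu0] : exists u0, phi u0 = None.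
  case: (pickP (fun u => phi u == None)) => [u0 /eqP h|hn]; first by exists u0.
  exfalso; apply: (no_full_col irr r_pos crit
     (g := fun x => if phi x is Some q then tag q else r0)) => x y axy.
  have := forallP (forallP phiH x) y; rewrite axy /=.
  have := hn x; have := hn y.
  by case: (phi x) => [qx|] //; case: (phi y) => [qy|].
rewrite -(cards1 u0); apply: eq_card => u; rewrite !inE.
apply/eqP/eqP => [hu|->//]; apply: phiI; by rewrite hu hu0.
Qed.

Lemma card_Inj_split : #|InjS adj G| = (\sum_u #|Inj_u u|)%N.
Proof.
rewrite double_count -sum1_card big_mkcond /=; apply: eq_bigr => phi _.
case: ifP => hp; have hp' := hp; rewrite inE in hp'.
  rewrite -(inj_one_none hp); apply: eq_card => u; by rewrite !inE hp'.
apply/eqP; rewrite eq_sym cards_eq0; apply/eqP/setP => u; by rewrite !inE hp'.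
Qed.

Definition homb (phi : {ffun T -> V}) := [forall x, forall y, adj x y ==> G (phi x) (phi y)].
Definition Hom_u u := [set phi : {ffun T -> V} |
  homb phi && (phi u == None) && [forall v, (v != u) ==> (phi v != None)]].
Definition Bad u (p : T * T) := [set phi : {ffun T -> V} |
  (p.1 != p.2) && (p.1 != u) && (p.2 != u) && (phi u == None) && (phi p.1 == phi p.2)].

Lemma Inj_sub u : Inj_u u \subset Hom_u u.
Proof.
apply/subsetP => phi; rewrite !inE => /andP[/andP[/injectiveP phiI phiH] /eqP hu].
rewrite /homb phiH hu eqxx /=; apply/forallP => v; apply/implyP => vu.
by apply/eqP => hv; move/eqP: vu; apply; apply: phiI; rewrite hv hu.
Qed.

Lemma card_Bad u p : #|Bad u p| <= #|V| ^ (#|T| - 2).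
Proof.
case: p => x y.
case: (boolP ((x != y) && (x != u) && (y != u))) => [/andP[/andP[xy xu] yu]|hn]; last first.
  suff -> : Bad u (x, y) = set0 by rewrite cards0.
  by apply/setP => phi; rewrite !inE /=; move: hn; case: ((x != y) && (x != u) && (y != u)).
pose S := {w : T | (w != u) && (w != x)}.
pose restr (phi : {ffun T -> V}) := [ffun w : S => phi (val w)].
have hS : #|{: S}| = (#|T| - 2)%N.
  rewrite card_sig.
  have -> : #|[pred w | (w != u) && (w != x)]| = #|~: [set u; x]|.
    by apply: eq_card => w; rewrite !inE negb_or.
  have := cardsC [set u; x]; rewrite cards2 eq_sym xu; lia.
rewrite -hS -card_ffun -(card_in_imset (f := restr)); first exact: max_card.
move=> phi psi; rewrite !inE /= xy xu yu /= => /andP[/eqP pu /eqP pxy] /andP[/eqP su /eqP sxy].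
move=> /ffunP e; apply/ffunP => w.
have eS w' (h : (w' != u) && (w' != x)) : phi w' = psi w'.
  by have := e (exist _ w' h); rewrite !ffunE.
case: (eqVneq w u) => [->|wu]; first by rewrite pu su.
case: (eqVneq w x) => [->|wx]; last by apply: eS; rewrite wu wx.
by rewrite pxy sxy; apply: eS; rewrite yu eq_sym xy.
Qed.

Lemma Hom_minus u : #|Hom_u u| <= #|Inj_u u| + #|T| ^ 2 * #|V| ^ (#|T| - 2).
Proof.
rewrite -(cardsID (Inj_u u) (Hom_u u)) (setIidPr (Inj_sub u)) leq_add2l.
have -> : (#|T| ^ 2 = #|{: T * T}|)%N by rewrite card_prod.
rewrite -sum_nat_const.
apply: (@leq_trans (\sum_(p : T * T) #|Bad u p|)); last first.
  by apply: leq_sum => p _; apply: card_Bad.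
rewrite double_count -sum1_card big_mkcond /=; apply: leq_sum => phi _.
case: ifP => // hp; rewrite !inE in hp.
case/andP: hp => /negP hI /andP[/andP[hH /eqP hu] hV].
case: (pickP (fun p : T * T => (p.1 != p.2) && (phi p.1 == phi p.2))) => [[x y] /= /andP[xy /eqP e]|none].
  apply/card_gt0P; exists (x, y); rewrite !inE /= xy hu eqxx e eqxx /= !andbT.
  apply/andP; split.
    apply/eqP => xu; move: xy; rewrite xu => uy.
    by have := forallP hV y; rewrite eq_sym uy -e xu hu.
  apply/eqP => yu; move: xy; rewrite yu => xu.
  by have := forallP hV x; rewrite xu e yu hu.
exfalso; apply: hI; rewrite hu eqxx andbT; move: hH; rewrite /homb => -> ; rewrite andbT; apply/injectiveP => x y e.
by apply/eqP; have := none (x, y); rewrite /= e eqxx andbT => /negbFE.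
Qed.
End Host.
Lemma count_lt m k : (\sum_(j < m | j < k) 1 = minn m k)%N.
Proof.
elim: m => [|m IH]; first by rewrite big_ord0 min0n.
rewrite big_mkcond big_ord_recr /= -big_mkcond IH.
case: ltnP => h; lia.
Qed.

Lemma card_slot r (n d : 'I_r -> nat) i0 (b : bool) : d i0 <= n i0 ->
 #|[pred p : hostV n | match p with Some q => (tag q == i0) && (b ==> (tagged q < d (tag q)))
                         | None => false end]| = if b then d i0 else n i0.
Proof.
move=> dn.
have -> : #|[pred p : hostV n | match p with Some q => (tag q == i0) && (b ==> (tagged q < d (tag q)))
                         | None => false end]| =
   #|[set q : {i : 'I_r & 'I_(n i)} | (tag q == i0) && (b ==> (tagged q < d (tag q)))]|.
  rewrite -(card_imset _ (@Some_inj _)); apply: eq_card => p; case: p => [q|].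
    by rewrite !inE (mem_imset _ _ (@Some_inj _)) inE.
  rewrite !inE; apply/esym/negbTE/imsetP => [[q]] //.
rewrite -sum1_card.
rewrite (eq_bigl (fun q : {i : 'I_r & 'I_(n i)} => (tag q == i0) && (b ==> (tagged q < d (tag q))))); last first.
  by move=> q; rewrite inE.
rewrite -(sig_big_dep (fun i => i == i0) (fun i (j : 'I_(n i)) => b ==> (j < d i)) (fun i j => 1%N)).
rewrite big_pred1_eq; case: b => /=.
  by rewrite count_lt; lia.
by rewrite sum1_card card_ord.
Qed.

Lemma big_prod_sub (T : finType) (u : T) (F : T -> nat) :
  (\prod_(w | w != u) F w = \prod_(v : {x : T | x != u}) F (val v))%N.
Proof.
rewrite (reindex_omap (val : {x : T | x != u} -> T) insub); last first.
  by move=> i iu; rewrite insubT.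
by apply: eq_bigl => v; rewrite valK eqxx andbT (valP v).
Qed.

Section Fam.
Variables (T : finType) (adj : rel T) (r : nat) (n d : 'I_r -> nat).
Hypothesis irr : irreflexive adj.
Hypothesis sym : symmetric adj.
Hypothesis r_pos : 0 < r.
Hypothesis dn : forall i, d i <= n i.
Local Notation V := (hostV n).
Local Notation G := (@host_adj r n d).
Variable u : T.
Local Notation SubT := {x : T | x != u}.

Definition okp (c : {ffun SubT -> 'I_r}) (w : T) (p : V) : bool :=
  match insub w with
  | Some v => match p with
              | Some q => (tag q == c v) && (adj u w ==> (tagged q < d (tag q)))
              | None => false end
  | None => p == None
  end.

Definition Fam c := [set phi : {ffun T -> V} | [forall w, okp c w (phi w)]].

Definition prodc (c : {ffun SubT -> 'I_r}) :=
  (\prod_(i < r) (d i ^ #|[set v | adj u (val v) & c v == i]| *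
                 n i ^ #|[set v | ~~ adj u (val v) & c v == i]|))%N.

Lemma card_Fam c : #|Fam c| = prodc c.
Proof.
have -> : #|Fam c| = #|(family (fun w => [pred p | okp c w p]) : simpl_pred {ffun T -> V})|.
  apply: eq_card => phi; rewrite inE; apply/forallP/familyP => h w; have := h w; by rewrite inE.
rewrite card_family foldrE big_map big_enum /=.
rewrite (bigD1 u) //=.
have -> : #|[pred p | okp c u p]| = 1%N.
  rewrite -(cards1 (None : V)); apply: eq_card => p.
  by rewrite !inE /okp insubF ?eqxx.
rewrite mul1n big_prod_sub.
rewrite (eq_bigr (fun v : SubT => if adj u (val v) then d (c v) else n (c v))); last first.
  move=> v _; rewrite -(@card_slot r n d (c v) (adj u (val v)) (dn (c v))).
  by apply: eq_card => p; rewrite !inE /okp valK.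
rewrite (partition_big (fun v => c v) xpredT) //=; apply: eq_bigr => i _.
rewrite (bigID (fun v : SubT => adj u (val v))) /=.
rewrite -!prod_nat_const; congr (_ * _)%N.
  apply: eq_big => [v|v /andP[/eqP <- ->]] //; by rewrite !inE andbC.
apply: eq_big => [v|v /andP[/eqP <- /negbTE ->]] //; by rewrite !inE andbC.
Qed.

Definition proper (c : {ffun SubT -> 'I_r}) :=
  [forall v, forall w, adj (val v) (val w) ==> (c v != c w)].
Definition col (phi : {ffun T -> V}) : {ffun SubT -> 'I_r} :=
  [ffun v : SubT => if phi (val v) is Some q then tag q else Ordinal r_pos].

Lemma okp_val c (v : SubT) p : okp c (val v) p =
  match p with
  | Some q => (tag q == c v) && (adj u (val v) ==> (tagged q < d (tag q)))
  | None => false end.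
Proof. by rewrite /okp valK. Qed.

Lemma okp_u c p : okp c u p = (p == None).
Proof. by rewrite /okp insubF ?eqxx. Qed.

Lemma fam_hom c phi : proper c -> phi \in Fam c -> phi \in @Hom_u T adj r n d u.
Proof.
move=> pc; rewrite !inE => /forallP h.
have hu : phi u = None by apply/eqP; rewrite -(okp_u c); exact: h.
have hv (v : SubT) : exists q, phi (val v) = Some q /\ tag q = c v /\
     (adj u (val v) -> tagged q < d (tag q)).
  have := h (val v); rewrite okp_val; case: (phi (val v)) => [q|] // /andP[/eqP e1 e2].
  by exists q; split; last split; last move=> a; rewrite // (implyP e2).
rewrite hu eqxx andbT; apply/andP; split; last first.
  apply/forallP => w; apply/implyP => wu; have [q [e _]] := hv (Sub w wu).
  by rewrite /= in e; rewrite e.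
apply/forallP => x; apply/forallP => y; apply/implyP => axy.
case: (eqVneq x u) => [xu|xu].
  have yu : y != u by apply/eqP => yu; move: axy; rewrite xu yu irr.
  have [q [e [_ hq]]] := hv (Sub y yu); rewrite /= in e hq.
  rewrite xu hu e /=; apply: hq; by rewrite -xu.
case: (eqVneq y u) => [yu|yu].
  have [q [e [_ hq]]] := hv (Sub x xu); rewrite /= in e hq.
  rewrite yu hu e /=; apply: hq; by rewrite sym -yu.
have [q [e [t _]]] := hv (Sub x xu); have [q' [e' [t' _]]] := hv (Sub y yu).
rewrite /= in e e'; rewrite e e' /= t t'.
by have := forallP (forallP pc (Sub x xu)) (Sub y yu); rewrite /= axy.
Qed.

Lemma fam_col c phi : phi \in Fam c -> c = col phi.
Proof.
rewrite inE => /forallP h; apply/ffunP => v; rewrite ffunE.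
have := h (val v); rewrite okp_val; case: (phi (val v)) => [q|] // /andP[/eqP e _]; by rewrite e.
Qed.

Lemma hom_fam phi : phi \in @Hom_u T adj r n d u -> (phi \in Fam (col phi)) && proper (col phi).
Proof.
rewrite inE => /andP[/andP[hH /eqP hu] hV].
have hs (v : SubT) : exists q, phi (val v) = Some q.
  have := forallP hV (val v); rewrite (valP v) /=; case: (phi (val v)) => [q|] //.
  by exists q.
apply/andP; split.
  rewrite inE; apply/forallP => w.
  case: (eqVneq w u) => [->|wu]; first by rewrite okp_u hu.
  have -> : w = val (Sub w wu : SubT) by [].
  rewrite okp_val; set v := (Sub w wu : SubT); have [q e] := hs v.
  rewrite e ffunE e eqxx /=; apply/implyP => a.
  by have := forallP (forallP hH u) (val v); rewrite a hu e.
apply/forallP => v; apply/forallP => w; apply/implyP => a.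
have [q e] := hs v; have [q' e'] := hs w.
rewrite !ffunE e e'.
by have := forallP (forallP hH (val v)) (val w); rewrite a e e'.
Qed.

Lemma card_Hom_u : #|@Hom_u T adj r n d u| = (\sum_(c | proper c) prodc c)%N.
Proof.
under eq_bigr do rewrite -card_Fam.
rewrite big_mkcond /=.
rewrite (eq_bigr (fun c => #|if proper c then Fam c else set0|)); last first.
  by move=> c _; case: ifP => _; rewrite ?cards0.
rewrite double_count -sum1_card big_mkcond /=; apply: eq_bigr => phi _.
case: ifP => hp.
  have /andP[hf hpr] := hom_fam hp.
  rewrite -(cards1 (col phi)); apply: eq_card => c; rewrite !inE.
  apply/eqP/idP => [->|]; first by rewrite hpr hf.
  by case: ifP => _; [exact: fam_col | rewrite inE].
apply/esym/eqP; rewrite cards_eq0; apply/eqP/setP => c; rewrite !inE.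
case: ifP => pc; last by rewrite inE.
apply/negP => hf; by rewrite (fam_hom pc hf) in hp.
Qed.
End Fam.
Local Open Scope ring_scope.
Section Approx.
Variables (R : realType) (del : R).
Hypothesis del0 : 0 <= del.

Definition K (a b : R) (m : nat) :=
  `|a| <= 2 ^+ m /\ `|b| <= 2 ^+ m /\ `|a - b| <= m%:R * 2 ^+ m * del.

Lemma K1 : K 1 1 0.
Proof. by rewrite /K subrr normr0 normr1 expr0 mul0r mul0r; split => //. Qed.

Lemma Kmul a b m a' b' m' : K a b m -> K a' b' m' -> K (a * a') (b * b') (m + m').
Proof.
move=> [ha [hb hab]] [ha' [hb' hab']]; rewrite /K !normrM exprD; split; last split.
- by apply: ler_pM.
- by apply: ler_pM.
have -> : a * a' - b * b' = a * (a' - b') + (a - b) * b' by ring.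
apply: (le_trans (ler_normD _ _)); rewrite !normrM natrD.
have p2 : 0 <= (2 : R) ^+ m by apply: exprn_ge0.
have p2' : 0 <= (2 : R) ^+ m' by apply: exprn_ge0.
have h1 : `|a| * `|a' - b'| <= 2 ^+ m * (m'%:R * 2 ^+ m' * del).
  by apply: ler_pM.
have h2 : `|a - b| * `|b'| <= (m%:R * 2 ^+ m * del) * 2 ^+ m'.
  by apply: ler_pM.
apply: (le_trans (lerD h1 h2)); rewrite le_eqVlt; apply/orP; left; apply/eqP; ring.
Qed.

Lemma Kpow a b k : K a b 1 -> K (a ^+ k) (b ^+ k) k.
Proof.
move=> h; elim: k => [|k IH]; first by rewrite !expr0; exact: K1.
by rewrite !exprS -addn1 addnC; apply: Kmul.
Qed.

Lemma Kbase a b : `|a| <= 2 -> `|b| <= 2 -> `|a - b| <= del -> K a b 1.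
Proof. move=> ha hb hab; rewrite /K expr1; split => //; split => //; rewrite mulr1n mul1r; have d0 := del0; lra. Qed.
End Approx.

Lemma Kprod (R : realType) (del : R) (I : finType) (A B : I -> R) (m : I -> nat) :
  (forall i, K del (A i) (B i) (m i)) ->
  K del (\prod_i A i) (\prod_i B i) (\sum_i m i)%N.
Proof.
move=> h; apply: (big_ind3 (K del)) => //; first exact: K1.
move=> *; exact: Kmul.
Qed.

Lemma real_term (R : realType) r (D M : 'I_r -> nat) (y x : 'I_r -> nat) (N del : R)
   (xi : 'I_r -> R) :
 0 < N -> 0 <= del <= 1 -> (0 < r)%N ->
 (forall i, (D i <= M i)%N) -> (forall i, (M i)%:R <= N) ->
 (forall i, `|xi i - (D i)%:R / N| <= del) ->
 (forall i, `|(M i)%:R / N - r%:R^-1| <= del) ->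
 `| (\prod_i ((D i)%:R ^+ y i * (M i)%:R ^+ x i)) -
    N ^+ (\sum_i (y i + x i)) * \prod_i ((r%:R ^+ x i)^-1 * xi i ^+ y i) |
   <= (\sum_i (y i + x i))%N%:R * 2 ^+ (\sum_i (y i + x i)) * del * N ^+ (\sum_i (y i + x i)).
Proof.
move=> N0 /andP[d0 d1] r0 DM MN hxi hM.
set m := (\sum_i (y i + x i))%N.
have Nn : N != 0 by rewrite gt_eqF.
have e1 : \prod_i ((D i)%:R ^+ y i * (M i)%:R ^+ x i) =
   N ^+ m * \prod_i (((D i)%:R / N) ^+ y i * ((M i)%:R / N) ^+ x i).
  rewrite /m -prodrXr -big_split /=; apply: eq_bigr => i _.
  rewrite exprD !expr_div_n; field.
  by rewrite !expf_neq0.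
have e2 : \prod_i ((r%:R ^+ x i)^-1 * xi i ^+ y i) =
   \prod_i (xi i ^+ y i * (r%:R^-1) ^+ x i).
  by apply: eq_bigr => i _; rewrite exprVn mulrC.
rewrite e1 e2 -mulrBr normrM (ger0_norm (exprn_ge0 _ (ltW N0))).
rewrite mulrC; apply: ler_wpM2r; first exact: (exprn_ge0 _ (ltW N0)).
suff [_ [_ h]] : K del (\prod_i (((D i)%:R / N) ^+ y i * ((M i)%:R / N) ^+ x i))
    (\prod_i (xi i ^+ y i * (r%:R^-1) ^+ x i)) m by [].
apply: Kprod => i; apply: Kmul; apply: Kpow => //; apply: Kbase => //.
- have h0 : 0 <= (D i)%:R / N by apply: divr_ge0; rewrite ?ler0n ?ltW.
  have h1 : (D i)%:R / N <= 1.
    rewrite ler_pdivrMr // mul1r; apply: le_trans (MN i); by rewrite ler_nat.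
  rewrite ger0_norm //; lra.
- have h0 : 0 <= (D i)%:R / N by apply: divr_ge0; rewrite ?ler0n ?ltW.
  have h1 : (D i)%:R / N <= 1.
    rewrite ler_pdivrMr // mul1r; apply: le_trans (MN i); by rewrite ler_nat.
  have := hxi i; move: (xi i) => z hz; rewrite ler_norml in hz; rewrite ler_norml; lra.

- rewrite distrC; exact: hxi.
- have h0 : 0 <= (M i)%:R / N by apply: divr_ge0; rewrite ?ler0n ?ltW.
  have h1 : (M i)%:R / N <= 1 by rewrite ler_pdivrMr // mul1r.
  rewrite ger0_norm //; lra.
- have h0 : 0 <= (r%:R : R)^-1 by rewrite invr_ge0 ler0n.
  have h1 : (r%:R : R)^-1 <= 1 by rewrite invf_le1 ?ltr0n // ler1n.
  rewrite ger0_norm //; lra.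
Qed.


Lemma sum_yx (T : finType) (adj : rel T) r (u : T) (c : {ffun {x : T | x != u} -> 'I_r}) :
 (\sum_(i < r) (#|[set v | adj u (val v) & c v == i]| + #|[set v | ~~ adj u (val v) & c v == i]|)
   = #|T|.-1)%N.
Proof.
rewrite (eq_bigr (fun i => #|[set v | c v == i]|)); last first.
  move=> i _; rewrite -(cardsID [set v | adj u (val v)] [set v | c v == i]); congr (_ + _)%N.
    by apply: eq_card => v; rewrite !inE andbC.
  by apply: eq_card => v; rewrite !inE andbC.
rewrite double_count -(cardC1 u).
have -> : #|predC1 u| = #|{: {x : T | x != u}}| by rewrite card_sig; apply: eq_card.
rewrite -sum1_card; apply: eq_bigr => v _.
by rewrite -(cards1 (c v)); apply: eq_card => i; rewrite !inE eq_sym.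
Qed.

Unset Implicit Arguments.

Theorem lemma5 (R : realType) (r f : nat) (adj : rel 'I_f) :
  (2 <= r)%N -> symmetric adj -> irreflexive adj -> r_critical adj r ->
  forall eps : R, 0 < eps ->
  exists delta : R, 0 < delta /\
    forall (n d : 'I_r -> nat) (xi : 'I_r -> R),
      let N : nat := (\sum_(i < r) n i)%N in
      1 / delta < N%:R ->
      (forall i, (d i <= n i)%N) ->
      (forall i, `|(n i)%:R - N%:R / r%:R| <= delta * N%:R) ->
      (forall i, `|xi i - (d i)%:R / N%:R| <= delta) ->
      `|(Fcount adj n d)%:R - N%:R ^+ f.-1 * PF adj xi| < eps * N%:R ^+ f.-1.
Proof.
move=> r2 sym irr crit eps eps0.
have r0 : (0 < r)%N by lia.
have rT := crit_rT irr crit; rewrite card_ord in rT.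
set M := (\sum_(u : 'I_f) #|{: {ffun {x : 'I_f | x != u} -> 'I_r}}|)%N.
set F1 := (f ^ 2 * 2 ^ f)%N.
set F2 := (f * 2 ^ f)%N.
set C : R := (f * F1 + M * F2 + 1)%N%:R.
have C0 : 0 < C by rewrite ltr0n addn1.
exists (Num.min 1 (eps / (2 * C))).
have dpos : 0 < Num.min 1 (eps / (2 * C)).
  rewrite lt_min ltr01 /=; apply: divr_gt0 => //; apply: mulr_gt0 => //; lra.
split; first exact: dpos.
move=> n d xi N HN Hd Hn Hxi.
set del := Num.min 1 (eps / (2 * C)) in dpos HN Hn Hxi.
have del1 : del <= 1 by rewrite ge_min lexx.
have delC : del * C <= eps / 2.
  have : del <= eps / (2 * C) by rewrite ge_min lexx orbT.
  rewrite ler_pdivlMr; last lra.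
  move=> h; rewrite ler_pdivlMr; lra.
have Npos : 0 < N%:R :> R.
  have : 0 < 1 / del by rewrite divr_gt0.
  move: HN; set t := 1 / del; move=> HN ht; lra.
have N1 : 1 < N%:R * del by rewrite -ltr_pdivrMr.
have hnN i : (n i <= N)%N by rewrite /N (bigD1 i) //= leq_addr.
have f2 : (2 <= f)%N by lia.
set B := del * N%:R ^+ f.-1.
have B0 : 0 <= B by apply: mulr_ge0; [lra | apply: exprn_ge0; lra].
pose Q (u : 'I_f) (c : {ffun {x : 'I_f | x != u} -> 'I_r}) : R :=
  \prod_(i < r) ((r%:R ^+ #|[set v | ~~ adj u (val v) & c v == i]|)^-1 *
                 xi i ^+ #|[set v | adj u (val v) & c v == i]|).
pose S := \sum_u \sum_(c | proper adj c) Q u c.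
have hPF : PF adj xi = (aut_num adj)%:R^-1 * S.
  rewrite /PF /S; congr (_ * _); rewrite big_mkcond /=; apply: eq_bigr => u _.
  case: ifP => hc; first by apply: eq_bigl.
  apply/esym/big_pred0 => c; apply/negbTE/negP => pc.
  by have := crit_of_col irr r0 crit pc; rewrite hc.
have Nn : (0 < N)%N by rewrite -(ltr0n R).
have powle : forall e a b, (a <= b)%N -> (a ^ e <= b ^ e)%N.
  by elim=> // e IH a b ab; rewrite !expnS; apply: leq_mul => //; apply: IH.
have NB : N%:R ^+ (f - 2) <= B.
  rewrite /B; have -> : f.-1 = (f - 2).+1 by lia.
  rewrite exprS.
  have h0 : 0 <= N%:R ^+ (f - 2) :> R by apply: exprn_ge0; lra.
  have -> : del * (N%:R * N%:R ^+ (f - 2)) = N%:R ^+ (f - 2) * (N%:R * del) by ring.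
  rewrite -[X in X <= _]mulr1; apply: ler_wpM2l => //; lra.
have bound1 u : `|(#|Inj_u adj n d u|)%:R - (#|Hom_u adj n d u|)%:R| <= F1%:R * B :> R.
  have hle := Hom_minus adj n d r0 u; rewrite card_hostV card_ord -/N in hle.
  have hIH := subset_leq_card (Inj_sub adj n d u).
  rewrite distrC ger0_norm; last by rewrite subr_ge0 ler_nat.
  have h1 : (#|Hom_u adj n d u|)%:R - (#|Inj_u adj n d u|)%:R <= (f ^ 2 * N.+1 ^ (f - 2))%N%:R :> R.
    rewrite lerBlDl -natrD ler_nat; exact: hle.
  apply: (le_trans h1).
  have h2 : (f ^ 2 * N.+1 ^ (f - 2) <= F1 * N ^ (f - 2))%N.
    rewrite /F1 -mulnA leq_mul2l; apply/orP; right.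
    apply: (@leq_trans ((2 * N) ^ (f - 2))); first by apply: powle; lia.
    rewrite expnMn leq_mul2r; apply/orP; right; rewrite leq_exp2l //; lia.
  apply: (le_trans (y := (F1 * N ^ (f - 2))%N%:R)); first by rewrite ler_nat.
  rewrite natrM natrX; apply: ler_wpM2l => //; exact: ler0n.
have hM' i : `|(n i)%:R / N%:R - r%:R^-1| <= del.
  have rn : (r%:R : R) != 0 by rewrite pnatr_eq0 -lt0n.
  have e : (n i)%:R / N%:R - r%:R^-1 = ((n i)%:R - N%:R / r%:R) / N%:R :> R.
    by field; rewrite rn gt_eqF.
  rewrite e normrM normfV (gtr0_norm Npos) ler_pdivrMr //; exact: Hn.
have bound2 u c : proper adj c -> `|(prodc adj n d c)%:R - N%:R ^+ f.-1 * Q u c| <= F2%:R * B.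
  move=> pc; have hm := sum_yx adj c; rewrite card_ord in hm.
  have e : (prodc adj n d c)%:R = \prod_i ((d i)%:R ^+ #|[set v | adj u (val v) & c v == i]| *
       (n i)%:R ^+ #|[set v | ~~ adj u (val v) & c v == i]|) :> R.
    by rewrite /prodc natr_prod; apply: eq_bigr => i _; rewrite natrM !natrX.
  have d01 : 0 <= del <= 1 by apply/andP; split => //; lra.
  have := real_term (fun i => #|[set v | adj u (val v) & c v == i]|)
     (fun i => #|[set v | ~~ adj u (val v) & c v == i]|) Npos d01 r0 Hd
     (fun i => eq_ind_r _ (hnN i) (ler_nat R (n i) N)) Hxi hM'.
  rewrite hm -e => h; apply: (le_trans h).
  have hF : (f.-1)%:R * 2 ^+ f.-1 <= F2%:R :> R.
    rewrite -natrX -natrM ler_nat /F2; apply: leq_mul; first exact: leq_pred.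
    by rewrite leq_exp2l // leq_pred.
  rewrite -mulrA; apply: ler_wpM2r => //.
have key : `|(#|InjS adj (@host_adj r n d)|)%:R - N%:R ^+ f.-1 * S| <= C * B.
  rewrite (card_Inj_split n d irr r0 crit) natr_sum /S mulr_sumr -sumrB.
  apply: (le_trans (ler_norm_sum _ _ _)).
  apply: (le_trans (y := \sum_(u : 'I_f) (F1%:R * B +
        (#|{: {ffun {x : 'I_f | x != u} -> 'I_r}}|)%:R * (F2%:R * B)))).
    apply: ler_sum => u _.
    have -> : (#|Inj_u adj n d u|)%:R - N%:R ^+ f.-1 * \sum_(c | proper adj c) Q u c =
       ((#|Inj_u adj n d u|)%:R - (#|Hom_u adj n d u|)%:R) +
       \sum_(c | proper adj c) ((prodc adj n d c)%:R - N%:R ^+ f.-1 * Q u c).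
      rewrite sumrB -mulr_sumr -natr_sum -(card_Hom_u irr sym r0 Hd u).
      by rewrite addrA subrK.
    apply: (le_trans (ler_normD _ _)); apply: lerD; first exact: bound1.
    apply: (le_trans (ler_norm_sum _ _ _)).
    apply: (le_trans (y := \sum_(c | proper adj c) F2%:R * B)).
      by apply: ler_sum => c pc; exact: bound2.
    rewrite big_mkcond /=; apply: (le_trans (y := \sum_c F2%:R * B)).
      apply: ler_sum => c _; case: ifP => _ //; apply: mulr_ge0 => //; exact: ler0n.
    rewrite sumr_const -[_ *+ #|_|]mulr_natl; apply: ler_wpM2r; first by apply: mulr_ge0 => //; exact: ler0n.
    by rewrite ler_nat; apply: max_card.
  rewrite big_split /= sumr_const card_ord -mulr_suml -natr_sum -/M.
  have E : C * B = F1%:R * B *+ f + M%:R * (F2%:R * B) + B.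
    by rewrite /C !natrD !natrM -mulr_natr; ring.
  by rewrite E lerDl.
have A1 : (0 < aut_num adj)%N.
  apply/card_gt0P; exists 1%g; rewrite inE; apply/forallP => x; apply/forallP => y.
  by rewrite !perm1.
have A0 : (aut_num adj)%:R != 0 :> R by rewrite pnatr_eq0 -lt0n.
have hF : (Fcount adj n d)%:R = (#|InjS adj (@host_adj r n d)|)%:R / (aut_num adj)%:R :> R.
  by rewrite -(card_orbit adj (@host_adj r n d)) natrM mulfK.
rewrite hPF hF.
have -> : (#|InjS adj (@host_adj r n d)|)%:R / (aut_num adj)%:R -
   N%:R ^+ f.-1 * ((aut_num adj)%:R^-1 * S) =
   ((#|InjS adj (@host_adj r n d)|)%:R - N%:R ^+ f.-1 * S) / (aut_num adj)%:R.
  by field.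
have Ap : 0 < (aut_num adj)%:R :> R by rewrite ltr0n.
rewrite normrM normfV (gtr0_norm Ap).
have NP : 0 < N%:R ^+ f.-1 :> R by apply: exprn_gt0.
apply: (le_lt_trans (y := C * B)).
  rewrite ler_pdivrMr //; apply: (le_trans key); rewrite ler_peMr //.
  - by apply: mulr_ge0 => //; lra.
  - by rewrite ler1n.
rewrite /B mulrA [C * del]mulrC.
have : del * C * N%:R ^+ f.-1 <= eps / 2 * N%:R ^+ f.-1 by apply: ler_wpM2r => //; lra.
move=> h; apply: (le_lt_trans h); rewrite ltr_pM2r //; lra.
Qed.
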